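(* For the discrete scheme described in the context (any $n\ge1$, $\delta t>0$): (i) $z\mapsto\theta^n(t,z)$ is nondecreasing for every $t\in[0,T)$; (ii) with $\hat\theta^n(t,z)=\theta^n(t,F^n(t,z))$ and $\hat q^n(t,z)=q^n(t,F^n(t,z))$, one has $\hat\theta^n(t,z)+\hat q^n(t,z)=\theta^n_0(z)+q^n_0(z)$; (iii) $t\mapsto\hat\theta^n(t,z)$ is nondecreasing for every $z\in[0,1)$; (iv) $q^n(t,z)\le Q^{sat}(\theta^n(t,z),z,k\delta t)$, where $k$ is the integer with $k\delta t\le t<(k+1)\delta t$.
   Context: $Q^{sat}:\mathbb{R}^3\to\mathbb{R}$ is smooth with $\partial_\theta Q^{sat}>0$, $\partial_zQ^{sat}<0$. $\Theta(w,z,t)$ is the solution $\theta$ of $\theta+Q^{sat}(\theta,z,t)=w$ (assumed well defined), with $\partial_w\Theta>0$, $\partial_z\Theta>0$. Discrete scheme. Fix $T>0$, $n\ge1$, $\delta t>0$, $z_i=i/n$, $J_i=[\frac{i-1}{n},\frac in)$. There are $n$ parcels $j=1,\dots,n$; initially parcel $j$ is at position $j$ with value $\theta^n_j$, where $\theta^n_1\le\dots\le\theta^n_n$ and $q^n_j\le Q^{sat}(\theta^n_j,z_j,0)$; parcel $j$ carries the fixed number $\theta^M_j=\theta^n_j+q^n_j$. One time step from $k\delta t$ to $(k+1)\delta t$, with $\tau=(k+1)\delta t$: positions $m=n,\dots,1$ are processed in this order. At stage $m$, with current configuration (parcel $p(i)$ at position $i$ with value $\vartheta_i$), position $i$ is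 wet if $\vartheta_i<\Theta(\theta^M_{p(i)},z_i,\tau)$; a wet position $i_0\le m$ is eligible if for every $i$ with $i_0<i\le m$, either $i$ is not wet and $\vartheta_i<\Theta(\theta^M_{p(i_0)},z_i,\tau)$, or $i$ is wet and $\theta^M_{p(i_0)}>\theta^M_{p(i)}$. If some position is eligible, let $i_*$ be the eligible position whose parcel has the largest $\theta^M$ (largest position in case of ties); that parcel moves to position $m$ with new value $\Theta(\theta^M_{p(i_* )},z_m,\tau)$, the parcels at $i_*+1,\dots,m$ move down one position keeping their values, others unchanged; otherwise nothing changes. After stage $1$ one has the configuration at time $(k+1)\delta t$. Let $\alpha_{k\delta t}(j)$ be the position of parcel $j$ after $k$ steps, $\theta^n_i(k\delta t)$ the value at position $i$, and $q^n_i(k\delta t)=\theta^M_p-\theta^n_i(k\delta t)$, $p$ the parcel at position $i$. For $k\delta t\le t<(k+1)\delta t$ and $z\in J_j$: $\theta^n(t,z)=\theta^n_j(k\delta t)$, $q^n(t,z)=q^n_j(k\delta t)$, $F^n(t,z)=z-z_j+z_{\alpha_{k\delta t}(j)}$, $\theta^n_0(z)=\theta^n_j$, $q^n_0(z)=q^n_j$. *)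

(* Defs.v *)
From Stdlib Require Import Reals List ZArith Lia Lra.
Open Scope R_scope.

Definition cont3 (f : R -> R -> R -> R) : Prop :=
  forall x y z eps, 0 < eps -> exists del, 0 < del /\
    forall x' y' z', Rabs (x' - x) < del -> Rabs (y' - y) < del -> Rabs (z' - z) < del ->
      Rabs (f x' y' z' - f x y z) < eps.

Definition pderiv3 (i : nat) (f g : R -> R -> R -> R) : Prop :=
  forall x y z,
    match i with
    | O => derivable_pt_lim (fun a => f a y z) x (g x y z)
    | 1%nat => derivable_pt_lim (fun a => f x a z) y (g x y z)
    | _ => derivable_pt_lim (fun a => f x y a) z (g x y z)
    end.

Fixpoint Ck3 (k : nat) (f : R -> R -> R -> R) : Prop :=
  cont3 f /\
  match k with
  | O => True
  | S k' => forall i, (i < 3)%nat -> exists g, pderiv3 i f g /\ Ck3 k' g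
  end.

Definition smooth3 (f : R -> R -> R -> R) : Prop := forall k, Ck3 k f.

Definition zpos (n : nat) (i : nat) : R := INR i / INR n.

(* a configuration: par i = parcel at position i, val i = value at position i *)
Record config := mkConfig { par : nat -> nat ; val : nat -> R }.

Definition thM (th0 q0 : nat -> R) (j : nat) : R := th0 j + q0 j.

Definition Rltb (x y : R) : bool := if Rlt_dec x y then true else false.
Definition Rleb (x y : R) : bool := if Rle_dec x y then true else false.

Definition wetb n (Th : R -> R -> R -> R) (M : nat -> R) (tau : R) (c : config) (i : nat) : bool :=
  Rltb (val c i) (Th (M (par c i)) (zpos n i) tau).

Definition eligb n Th M tau (c : config) (m i0 : nat) : bool :=
  (1 <=? i0)%nat && (i0 <=? m)%nat && wetb n Th M tau c i0 &&
  forallb (fun i => if wetb n Th M tau c i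
                    then Rltb (M (par c i)) (M (par c i0))
                    else Rltb (val c i) (Th (M (par c i0)) (zpos n i) tau))
          (List.seq (S i0) (m - i0)).

Definition select n Th M tau (c : config) (m : nat) : option nat :=
  fold_left (fun best i =>
     if eligb n Th M tau c m i then
       match best with
       | None => Some i
       | Some b => if Rleb (M (par c b)) (M (par c i)) then Some i else best
       end
     else best) (List.seq 1 m) None.

Definition move n (Th : R -> R -> R -> R) (M : nat -> R) tau (c : config) (m s : nat) : config :=
  mkConfig
    (fun i => if (i <? s)%nat then par c i
              else if (i <? m)%nat then par c (S i)
              else if (i =? m)%nat then par c s
              else par c i)
    (fun i => if (i <? s)%nat then val c i
              else if (i <? m)%nat then val c (S i)
              else if (i =? m)%nat then Th (M (par c s)) (zpos n m) tau
              else val c i).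

Definition stage n Th M tau (c : config) (m : nat) : config :=
  match select n Th M tau c m with
  | Some s => move n Th M tau c m s
  | None => c
  end.

Fixpoint stages n Th M tau (m : nat) (c : config) : config :=
  match m with
  | O => c
  | S m' => stages n Th M tau m' (stage n Th M tau c (S m'))
  end.

(* one time step, with tau = (k+1) dt *)
Definition step n Th M tau (c : config) : config := stages n Th M tau n c.

Definition init_config (th0 : nat -> R) : config := mkConfig (fun i => i) th0.

Fixpoint cfg n (Th : R -> R -> R -> R) (th0 q0 : nat -> R) (dt : R) (k : nat) : config :=
  match k with
  | O => init_config th0
  | S k' => step n Th (thM th0 q0) (INR k * dt) (cfg n Th th0 q0 dt k')
  end.

Definition alpha (n : nat) (c : config) (j : nat) : nat :=
  match List.find (fun i => (par c i =? j)%nat) (List.seq 1 n) with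
  | Some i => i
  | None => O
  end.

Definition tidx (dt t : R) : nat := Z.to_nat (Int_part (t / dt)).
(* j with z in J_j = [(j-1)/n, j/n) *)
Definition zidx (n : nat) (z : R) : nat := S (Z.to_nat (Int_part (z * INR n))).

Definition thetan n Th th0 q0 dt (t z : R) : R :=
  val (cfg n Th th0 q0 dt (tidx dt t)) (zidx n z).

Definition qn n Th th0 q0 dt (t z : R) : R :=
  let c := cfg n Th th0 q0 dt (tidx dt t) in
  thM th0 q0 (par c (zidx n z)) - val c (zidx n z).

Definition Fn n Th th0 q0 dt (t z : R) : R :=
  let j := zidx n z in
  z - zpos n j + zpos n (alpha n (cfg n Th th0 q0 dt (tidx dt t)) j).

Definition theta0 n (th0 : nat -> R) (z : R) : R := th0 (zidx n z).
Definition q0f n (q0 : nat -> R) (z : R) : R := q0 (zidx n z).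

Definition thetahat n Th th0 q0 dt (t z : R) : R :=
  thetan n Th th0 q0 dt t (Fn n Th th0 q0 dt t z).
Definition qhat n Th th0 q0 dt (t z : R) : R :=
  qn n Th th0 q0 dt t (Fn n Th th0 q0 dt t z).

(* Main.v *)
Require Import Defs.
From Stdlib Require Import Reals List ZArith Lia Lra ClassicalEpsilon Bool.
Open Scope R_scope.

Lemma incr_of_deriv (f : R -> R) :
  (forall x, exists d, derivable_pt_lim f x d /\ 0 < d) ->
  forall x y, x < y -> f x < f y.
Proof.
  intros H.
  assert (pr : derivable f).
  { intro x. destruct (constructive_indefinite_description _ (H x)) as [d [Hd _]].
    exists d. exact Hd. }
  intros x y Hxy.
  apply (derive_increasing_interv (x-1) (y+1) f pr); try lra.
  intros t _. destruct (H t) as [d [Hd Hp]].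
  rewrite (derive_pt_eq_0 f t d (pr t) Hd). exact Hp.
Qed.

Lemma mono_of_deriv (f : R -> R) :
  (forall x, exists d, derivable_pt_lim f x d /\ 0 < d) ->
  forall x y, x <= y -> f x <= f y.
Proof.
  intros H x y Hxy. destruct (Rle_lt_or_eq_dec _ _ Hxy) as [h|h].
  - left. apply incr_of_deriv; auto.
  - subst; lra.
Qed.

Lemma antimono_of_deriv (f : R -> R) :
  (forall x, exists d, derivable_pt_lim f x d /\ d < 0) ->
  forall x y, x <= y -> f y <= f x.
Proof.
  intros H x y Hxy.
  assert (H' : forall x, exists d, derivable_pt_lim (fun a => - f a) x d /\ 0 < d).
  { intro a. destruct (H a) as [d [Hd Hn]]. exists (-d). split; [|lra].
    apply (derivable_pt_lim_opp f a d Hd). }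
  pose proof (mono_of_deriv _ H' x y Hxy). simpl in H0. lra.
Qed.

Lemma Int_part_unique (r : R) (k : Z) : IZR k <= r < IZR k + 1 -> Int_part r = k.
Proof.
  intros [H1 H2]. destruct (base_Int_part r) as [B1 B2].
  assert (IZR k < IZR (Int_part r) + 1) by lra.
  assert (IZR (Int_part r) < IZR k + 1) by lra.
  rewrite <- plus_IZR in H, H0. apply lt_IZR in H. apply lt_IZR in H0. lia.
Qed.

Lemma Int_part_mono (r r' : R) : r <= r' -> (Int_part r <= Int_part r')%Z.
Proof.
  intros H. destruct (base_Int_part r) as [B1 B2]. destruct (base_Int_part r') as [C1 C2].
  assert (IZR (Int_part r) < IZR (Int_part r') + 1) by lra.
  rewrite <- plus_IZR in H0. apply lt_IZR in H0. lia.
Qed.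

Lemma Rltb_iff x y : Rltb x y = true <-> x < y.
Proof. unfold Rltb; destruct (Rlt_dec x y); split; intros; auto; try congruence; contradiction. Qed.
Lemma Rleb_iff x y : Rleb x y = true <-> x <= y.
Proof. unfold Rleb; destruct (Rle_dec x y); split; intros; auto; try congruence; contradiction. Qed.

Section Scheme.
Variables (n : nat) (Th : R -> R -> R -> R) (M : nat -> R) (tau : R).

Definition wetP (c : config) i := val c i < Th (M (par c i)) (zpos n i) tau.

Lemma wetb_iff c i : wetb n Th M tau c i = true <-> wetP c i.
Proof. unfold wetb, wetP. apply Rltb_iff. Qed.

Lemma wetb_false c i : wetb n Th M tau c i = false <-> ~ wetP c i.
Proof. rewrite <- wetb_iff. destruct (wetb n Th M tau c i); split; congruence. Qed.

Definition condP (c : config) p i :=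
  (wetP c i -> M (par c i) < M (par c p)) /\
  (~ wetP c i -> val c i < Th (M (par c p)) (zpos n i) tau).

Lemma cond_iff c p i :
  (if wetb n Th M tau c i then Rltb (M (par c i)) (M (par c p))
   else Rltb (val c i) (Th (M (par c p)) (zpos n i) tau)) = true <-> condP c p i.
Proof.
  unfold condP. destruct (wetb n Th M tau c i) eqn:E.
  - apply wetb_iff in E. rewrite Rltb_iff. tauto.
  - apply wetb_false in E. rewrite Rltb_iff. tauto.
Qed.

Lemma eligb_iff c m p : eligb n Th M tau c m p = true <->
  (1 <= p)%nat /\ (p <= m)%nat /\ wetP c p /\ forall i, (p < i <= m)%nat -> condP c p i.
Proof.
  unfold eligb. rewrite !andb_true_iff, !Nat.leb_le, forallb_forall, wetb_iff.
  split.
  - intros [[[H1 H2] H3] H4]. split; [|split; [|split]]; auto.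
    intros x Hx. apply cond_iff. apply H4. apply in_seq. lia.
  - intros [H1 [H2 [H3 H4]]]. split; [split; [split|]|]; auto.
    intros x Hx. apply in_seq in Hx. apply cond_iff. apply H4. lia.
Qed.

Definition selg (c : config) m := fun best i =>
     if eligb n Th M tau c m i then
       match best with
       | None => Some i
       | Some b => if Rleb (M (par c b)) (M (par c i)) then Some i else best
       end
     else best.

Lemma fold_some c m : forall l b s, fold_left (selg c m) l b = Some s ->
  (b = Some s \/ (In s l /\ eligb n Th M tau c m s = true)) /\
  (forall s0, b = Some s0 -> M (par c s0) <= M (par c s)) /\
  (forall i, In i l -> eligb n Th M tau c m i = true -> M (par c i) <= M (par c s)).
Proof.
  induction l as [|a l IH]; intros b s H; simpl in H.
  - subst. split; [left; auto|]. split; [intros s0 E; inversion E; lra|]. intros i [].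
  - destruct (IH _ _ H) as [A1 [A2 A3]].
    unfold selg in A1, A2.
    destruct (eligb n Th M tau c m a) eqn:Ea.
    + destruct b as [b|].
      * destruct (Rleb (M (par c b)) (M (par c a))) eqn:Eb.
        -- apply Rleb_iff in Eb.
           split; [destruct A1 as [A1|A1]; [inversion A1; subst; right; split; simpl; auto|right; simpl; tauto]|].
           split.
           ++ intros s0 E. inversion E; subst. specialize (A2 a eq_refl). lra.
           ++ intros i [Hi|Hi] Ei; [subst; apply A2; auto|apply A3; auto].
        -- assert (Eb' : ~ M (par c b) <= M (par c a)) by (rewrite <- Rleb_iff; congruence).
           split; [destruct A1 as [A1|A1]; [left; auto|right; simpl; tauto]|].
           split; [intros s0 E; apply A2; auto|].
           intros i [Hi|Hi] Ei; [subst|apply A3; auto].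
           specialize (A2 b eq_refl). lra.
      * split; [destruct A1 as [A1|A1]; [inversion A1; subst; right; split; simpl; auto|right; simpl; tauto]|].
        split; [intros s0 E; discriminate|].
        intros i [Hi|Hi] Ei; [subst; apply A2; auto|apply A3; auto].
    + split; [destruct A1 as [A1|A1]; [left; auto|right; simpl; tauto]|].
      split; [auto|]. intros i [Hi|Hi] Ei; [subst; congruence|apply A3; auto].
Qed.

Lemma fold_none c m : forall l b, fold_left (selg c m) l b = None ->
  b = None /\ forall i, In i l -> eligb n Th M tau c m i = false.
Proof.
  induction l as [|a l IH]; intros b H; simpl in H.
  - split; auto. intros i [].
  - destruct (IH _ H) as [A1 A2]. unfold selg in A1.
    destruct (eligb n Th M tau c m a) eqn:Ea.
    + destruct b; [destruct Rleb|]; discriminate.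
    + split; auto. intros i [Hi|Hi]; [subst; auto|auto].
Qed.

Lemma select_some c m s : select n Th M tau c m = Some s ->
  eligb n Th M tau c m s = true /\
  forall i, eligb n Th M tau c m i = true -> M (par c i) <= M (par c s).
Proof.
  intros H. change (fold_left (selg c m) (seq 1 m) None = Some s) in H.
  destruct (fold_some _ _ _ _ _ H) as [[A1|A1] [_ A3]]; [discriminate|].
  split; [tauto|]. intros i Ei. apply A3; auto.
  apply eligb_iff in Ei. apply in_seq. lia.
Qed.

Lemma select_none c m : select n Th M tau c m = None ->
  forall i, eligb n Th M tau c m i = false.
Proof.
  intros H i. change (fold_left (selg c m) (seq 1 m) None = None) in H.
  destruct (fold_none _ _ _ _ H) as [_ A].
  destruct (eligb n Th M tau c m i) eqn:E; auto.
  assert (Hi := E). apply eligb_iff in Hi. rewrite <- E. apply A. apply in_seq. lia.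
Qed.

End Scheme.

Section Scheme2.
Variables (n : nat) (Th : R -> R -> R -> R) (M : nat -> R) (tau : R).
Hypothesis Hn : (1 <= n)%nat.
Hypothesis HThw : forall w w' z t, w <= w' -> Th w z t <= Th w' z t.
Hypothesis HThz : forall w z z' t, z <= z' -> Th w z t <= Th w z' t.

Lemma zpos_mono i j : (i <= j)%nat -> zpos n i <= zpos n j.
Proof.
  intros H. unfold zpos, Rdiv. apply Rmult_le_compat_r.
  - left. apply Rinv_0_lt_compat. apply lt_0_INR. lia.
  - apply le_INR. auto.
Qed.

Definition fmap s m i := if (i <? s)%nat then i else if (i <? m)%nat then S i
   else if (i =? m)%nat then s else i.

Ltac dcase := repeat match goal with
  | |- context [Nat.ltb ?a ?b] => destruct (Nat.ltb_spec a b)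
  | |- context [Nat.eqb ?a ?b] => destruct (Nat.eqb_spec a b)
  end.

Lemma par_move c m s i : par (move n Th M tau c m s) i = par c (fmap s m i).
Proof. unfold move, fmap; simpl. dcase; subst; auto. Qed.

Lemma val_move1 c m s i : (i < s)%nat \/ (m < i)%nat -> val (move n Th M tau c m s) i = val c i.
Proof. intros H. unfold move; simpl. dcase; try lia; auto. Qed.

Lemma val_move2 c m s i : (s <= i < m)%nat -> val (move n Th M tau c m s) i = val c (S i).
Proof. intros H. unfold move; simpl. dcase; try lia; auto. Qed.

Lemma val_move3 c m s : (s <= m)%nat -> val (move n Th M tau c m s) m = Th (M (par c s)) (zpos n m) tau.
Proof. intros H. unfold move; simpl. dcase; try lia; auto. Qed.

Definition Perm (c : config) :=
  (forall i, (1 <= i <= n)%nat -> (1 <= par c i <= n)%nat) /\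
  (forall i i', (1 <= i <= n)%nat -> (1 <= i' <= n)%nat -> par c i = par c i' -> i = i') /\
  (forall j, (1 <= j <= n)%nat -> exists i, (1 <= i <= n)%nat /\ par c i = j).

Lemma perm_move c m s : Perm c -> (1 <= s)%nat -> (s <= m)%nat -> (m <= n)%nat ->
  Perm (move n Th M tau c m s).
Proof.
  intros [P1 [P2 P3]] H1 H2 H3.
  assert (F1 : forall i, (1 <= i <= n)%nat -> (1 <= fmap s m i <= n)%nat).
  { intros i Hi; unfold fmap; dcase; lia. }
  assert (F2 : forall i i', (1 <= i <= n)%nat -> (1 <= i' <= n)%nat -> fmap s m i = fmap s m i' -> i = i').
  { intros i i' Hi Hi'; unfold fmap; dcase; lia. }
  split; [|split].
  - intros i Hi. rewrite par_move. apply P1, F1, Hi.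
  - intros i i' Hi Hi' E. rewrite !par_move in E. apply F2; auto.
  - intros j Hj. destruct (P3 j Hj) as [i [Hi Ei]].
    assert (exists i', (1 <= i' <= n)%nat /\ fmap s m i' = i) as [i' [Hi' E']].
    { destruct (Nat.ltb_spec i s).
      - exists i. split; auto. unfold fmap; dcase; lia.
      - destruct (Nat.eqb_spec i s).
        + exists m. split; [lia|]. unfold fmap; dcase; lia.
        + destruct (Nat.leb_spec i m).
          * exists (pred i). split; [lia|]. unfold fmap; dcase; lia.
          * exists i. split; auto. unfold fmap; dcase; lia. }
    exists i'. split; auto. rewrite par_move, E'. auto.
Qed.

Lemma track_move c m s : wetP n Th M tau c s -> (1 <= s)%nat -> (s <= m)%nat -> (m <= n)%nat ->
  forall i, (1 <= i <= n)%nat -> exists i', (1 <= i' <= n)%nat /\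
    par (move n Th M tau c m s) i' = par c i /\ val c i <= val (move n Th M tau c m s) i'.
Proof.
  intros W H1 H2 H3 i Hi.
  destruct (Nat.ltb_spec i s).
  - exists i. rewrite par_move, val_move1 by lia. unfold fmap; dcase; try lia; repeat split; try lia; try lra; auto.
  - destruct (Nat.eqb_spec i s).
    + subst. exists m. rewrite par_move, val_move3 by lia. unfold fmap; dcase; try lia. split; [lia|split; auto].
      unfold wetP in W. left. eapply Rlt_le_trans; [apply W|]. apply HThz, zpos_mono. auto.
    + destruct (Nat.leb_spec i m).
      * exists (pred i). rewrite par_move, val_move2 by lia. unfold fmap; dcase; try lia.
        replace (S (pred i)) with i by lia. repeat split; try lia; try lra; auto.
      * exists i. rewrite par_move, val_move1 by lia. unfold fmap; dcase; try lia; repeat split; try lia; try lra; auto.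
Qed.


Lemma select_bounds c m s : select n Th M tau c m = Some s ->
  (1 <= s)%nat /\ (s <= m)%nat /\ wetP n Th M tau c s.
Proof. intros H. destruct (select_some _ _ _ _ _ _ _ H) as [E _]. apply eligb_iff in E. tauto. Qed.

Lemma stage_above c m i : (m < i)%nat ->
  par (stage n Th M tau c m) i = par c i /\ val (stage n Th M tau c m) i = val c i.
Proof.
  intros H. unfold stage. destruct (select n Th M tau c m) as [s|] eqn:Es; auto.
  destruct (select_bounds _ _ _ Es) as [H1 [H2 _]].
  rewrite par_move, val_move1 by lia. unfold fmap; dcase; try lia; auto.
Qed.

Lemma stages_above : forall m c i, (m < i)%nat ->
  par (stages n Th M tau m c) i = par c i /\ val (stages n Th M tau m c) i = val c i.
Proof.
  induction m as [|m IH]; intros c i H; simpl; auto.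
  destruct (IH (stage n Th M tau c (S m)) i) as [A B]; [lia|].
  destruct (stage_above c (S m) i) as [C D]; [lia|]. rewrite A, B, C, D. auto.
Qed.

Lemma wet_transfer c1 c2 i1 i2 : par c1 i1 = par c2 i2 -> val c1 i1 = val c2 i2 ->
  (i1 <= i2)%nat -> wetP n Th M tau c1 i1 -> wetP n Th M tau c2 i2.
Proof.
  unfold wetP. intros E1 E2 Hi W. rewrite <- E1, <- E2.
  eapply Rlt_le_trans; [apply W|]. apply HThz, zpos_mono; auto.
Qed.

Lemma wet_eq c1 c2 i : par c1 i = par c2 i -> val c1 i = val c2 i ->
  (wetP n Th M tau c1 i <-> wetP n Th M tau c2 i).
Proof. unfold wetP. intros E1 E2. rewrite E1, E2. tauto. Qed.

Lemma cond_transfer c1 c2 p1 p2 i1 i2 : par c1 i1 = par c2 i2 -> val c1 i1 = val c2 i2 ->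
  par c1 p1 = par c2 p2 -> (i1 <= i2)%nat ->
  condP n Th M tau c1 p1 i1 -> condP n Th M tau c2 p2 i2.
Proof.
  unfold condP, wetP. intros E1 E2 E3 Hi [C1 C2]. rewrite <- E1, <- E2, <- E3.
  assert (Z := zpos_mono _ _ Hi).
  set (a := val c1 i1) in *. set (Mi := M (par c1 i1)) in *. set (Mp := M (par c1 p1)) in *.
  assert (T1 := HThz Mi _ _ tau Z). assert (T2 := HThz Mp _ _ tau Z).
  split.
  - intros W. destruct (Rlt_dec a (Th Mi (zpos n i1) tau)) as [h|h]; [auto|].
    specialize (C2 h). destruct (Rlt_dec Mi Mp) as [g|g]; auto.
    assert (Mp <= Mi) by lra. assert (T3 := HThw _ _ (zpos n i1) tau H). lra.
  - intros W. assert (~ a < Th Mi (zpos n i1) tau) by lra. specialize (C2 H). lra.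
Qed.

Lemma stage_dry c m : (1 <= m)%nat -> ~ wetP n Th M tau (stage n Th M tau c m) m.
Proof.
  intros Hm. unfold stage. destruct (select n Th M tau c m) as [s|] eqn:Es.
  - destruct (select_bounds _ _ _ Es) as [H1 [H2 _]].
    unfold wetP. rewrite par_move, val_move3 by lia. unfold fmap; dcase; try lia. lra.
  - intros W. assert (E := select_none _ _ _ _ _ _ Es m).
    assert (E' : eligb n Th M tau c m m = true).
    { apply eligb_iff. repeat split; auto; lia. }
    congruence.
Qed.

Lemma stages_dry : forall m c i, (1 <= i <= m)%nat -> ~ wetP n Th M tau (stages n Th M tau m c) i.
Proof.
  induction m as [|m IH]; intros c i Hi; [lia|]. simpl.
  destruct (Nat.eqb_spec i (S m)).
  - subst. destruct (stages_above m (stage n Th M tau c (S m)) (S m)) as [A B]; [lia|].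
    rewrite (wet_eq _ _ _ A B). apply stage_dry. lia.
  - apply IH. lia.
Qed.

Lemma perm_stage c m : Perm c -> (m <= n)%nat -> Perm (stage n Th M tau c m).
Proof.
  intros P H. unfold stage. destruct (select n Th M tau c m) as [s|] eqn:Es; auto.
  destruct (select_bounds _ _ _ Es) as [H1 [H2 _]]. apply perm_move; auto.
Qed.

Lemma perm_stages : forall m c, Perm c -> (m <= n)%nat -> Perm (stages n Th M tau m c).
Proof.
  induction m as [|m IH]; intros c P H; simpl; auto. apply IH; [apply perm_stage|]; auto; lia.
Qed.

Definition Track (c c' : config) := forall i, (1 <= i <= n)%nat -> exists i', (1 <= i' <= n)%nat /\
    par c' i' = par c i /\ val c i <= val c' i'.

Lemma track_stage c m : (m <= n)%nat -> Track c (stage n Th M tau c m).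
Proof.
  intros H. unfold stage. destruct (select n Th M tau c m) as [s|] eqn:Es.
  - destruct (select_bounds _ _ _ Es) as [H1 [H2 W]]. intros i Hi. apply track_move; auto.
  - intros i Hi. exists i. split; auto. split; auto. lra.
Qed.

Lemma track_trans c1 c2 c3 : Track c1 c2 -> Track c2 c3 -> Track c1 c3.
Proof.
  intros A B i Hi. destruct (A i Hi) as [i2 [H2 [E2 V2]]]. destruct (B i2 H2) as [i3 [H3 [E3 V3]]].
  exists i3. split; auto. split; [congruence|lra].
Qed.

Lemma track_stages : forall m c, (m <= n)%nat -> Track c (stages n Th M tau m c).
Proof.
  induction m as [|m IH]; intros c H; simpl.
  - intros i Hi. exists i. split; auto. split; auto. lra.
  - apply (track_trans _ (stage n Th M tau c (S m))); [apply track_stage; lia|]. apply IH. lia.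
Qed.


Definition Sorted (c : config) := forall i, (1 <= i)%nat -> (i < n)%nat -> val c i <= val c (S i).

Lemma sorted_le c : Sorted c -> forall i j, (1 <= i)%nat -> (i <= j)%nat -> (j <= n)%nat -> val c i <= val c j.
Proof.
  intros So i j Hi Hij Hj. induction j as [|j IH]; [lia|].
  destruct (Nat.eqb_spec i (S j)); [subst; lra|].
  eapply Rle_trans; [apply IH; lia|]. apply So; lia.
Qed.

Definition Eprop m (c : config) := (m < n)%nat -> forall p, eligb n Th M tau c m p = true ->
  Th (M (par c p)) (zpos n m) tau <= val c (S m).

Lemma sorted_stage c m : Sorted c -> Eprop m c -> (1 <= m)%nat -> (m <= n)%nat ->
  Sorted (stage n Th M tau c m).
Proof.
  intros So E H1 H2. unfold stage. destruct (select n Th M tau c m) as [s|] eqn:Es; auto.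
  destruct (select_some _ _ _ _ _ _ _ Es) as [El _]. assert (El' := El).
  apply eligb_iff in El as [S1 [S2 [W Cd]]].
  assert (Ws : val c s < Th (M (par c s)) (zpos n m) tau).
  { eapply Rlt_le_trans; [apply W|]. apply HThz, zpos_mono; auto. }
  intros i Hi Hin.
  destruct (Nat.ltb_spec (S i) s).
  - rewrite !val_move1 by lia. apply So; lia.
  - destruct (Nat.eqb_spec (S i) s).
    + rewrite val_move1 by lia. destruct (Nat.ltb_spec s m).
      * rewrite val_move2 by lia. subst s. eapply Rle_trans; apply So; lia.
      * assert (s = m) by lia. subst. rewrite val_move3 by lia.
        eapply Rle_trans; [apply So; lia|]. lra.
    + destruct (Nat.ltb_spec (S i) m).
      * rewrite !val_move2 by lia. apply So; lia.
      * destruct (Nat.eqb_spec (S i) m).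
        -- rewrite val_move2 by lia. rewrite e, val_move3 by lia.
           destruct (Cd m) as [C1 C2]; [lia|].
           destruct (Rlt_dec (val c m) (Th (M (par c m)) (zpos n m) tau)) as [h|h].
           ++ specialize (C1 h). left. eapply Rlt_le_trans; [apply h|]. apply HThw. lra.
           ++ left. apply C2. exact h.
        -- destruct (Nat.eqb_spec i m).
           ++ subst i. rewrite val_move3, val_move1 by lia. apply E; auto.
           ++ rewrite !val_move1 by lia. apply So; lia.
Qed.

Lemma E_stage c m : (S m <= n)%nat -> Eprop m (stage n Th M tau c (S m)).
Proof.
  intros Hmn _ p Ep. unfold stage in *. destruct (select n Th M tau c (S m)) as [s|] eqn:Es.
  - destruct (select_some _ _ _ _ _ _ _ Es) as [Els Mx].
    assert (Els' := Els). apply eligb_iff in Els' as [S1 [S2 [W Cs]]].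
    apply eligb_iff in Ep as [P1 [P2 [Wp Cp]]].

    rewrite val_move3 by lia. rewrite par_move.
    remember (fmap s (S m) p) as q eqn:Hqd.
    assert (Hq : (q = p /\ (p < s)%nat) \/ (q = S p /\ (s <= p)%nat)).
    { subst q; unfold fmap. dcase; try lia; auto. }
    assert (Pq : par (move n Th M tau c (S m) s) p = par c q) by (subst q; apply par_move).
    assert (Vq : val (move n Th M tau c (S m) s) p = val c q).
    { destruct Hq as [[-> h]|[-> h]]; [apply val_move1; lia|apply val_move2; lia]. }
    assert (Key : M (par c q) <= M (par c s)).
    { destruct (Rle_dec (M (par c q)) (M (par c s))) as [h|h]; auto.
      apply Mx. apply eligb_iff. split; [destruct Hq as [[-> ?]|[-> ?]]; lia|].
      split; [destruct Hq as [[-> ?]|[-> ?]]; lia|].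
      split; [eapply wet_transfer; [apply Pq|apply Vq| |apply Wp]; destruct Hq as [[-> ?]|[-> ?]]; lia|].
      intros i Hi.
      destruct (Nat.ltb_spec i s).
      - assert (p < s)%nat by (destruct Hq as [[-> ?]|[-> ?]]; lia).
        assert (q = p) by (destruct Hq as [[-> ?]|[-> ?]]; lia).
        eapply cond_transfer; [| |apply Pq| |apply (Cp i)].
        + rewrite par_move. unfold fmap; dcase; try lia; auto.
        + apply val_move1; lia.
        + lia.
        + destruct Hq as [[-> ?]|[-> ?]]; lia.
      - destruct (Nat.eqb_spec i s).
        + subst i. split; [intros _; lra|intros h'; contradiction].
        + eapply cond_transfer with (i1 := pred i); [| |apply Pq| |apply (Cp (pred i))].
          * rewrite par_move. unfold fmap; dcase; try lia. f_equal; lia.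
          * rewrite val_move2 by lia. f_equal; lia.
          * lia.
          * destruct Hq as [[-> ?]|[-> ?]]; lia. }
    eapply Rle_trans; [apply HThw; exact Key|]. apply HThz, zpos_mono. lia.
  - apply eligb_iff in Ep as [P1 [P2 [Wp Cp]]].
    assert (Nw : ~ wetP n Th M tau c (S m)).
    { intros W. assert (E := select_none _ _ _ _ _ _ Es (S m)).
      assert (E' : eligb n Th M tau c (S m) (S m) = true) by (apply eligb_iff; repeat split; auto; lia).
      congruence. }
    destruct (Rlt_dec (val c (S m)) (Th (M (par c p)) (zpos n (S m)) tau)) as [h|h].
    + exfalso. assert (E := select_none _ _ _ _ _ _ Es p).
      assert (E' : eligb n Th M tau c (S m) p = true).
      { apply eligb_iff. split; [lia|split; [lia|split; auto]]. intros i Hi.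
        destruct (Nat.eqb_spec i (S m)).
        - subst. split; [intros; contradiction|auto].
        - apply Cp. lia. }
      congruence.
    + eapply Rle_trans; [apply HThz, (zpos_mono m (S m)); lia|]. lra.
Qed.

Lemma sorted_stages : forall m c, (m <= n)%nat -> Sorted c -> Eprop m c -> Sorted (stages n Th M tau m c).
Proof.
  induction m as [|m IH]; intros c H So E; simpl; auto.
  apply IH; [lia| |apply E_stage; lia]. apply sorted_stage; auto; lia.
Qed.

Lemma sorted_step c : Sorted c -> Sorted (step n Th M tau c).
Proof. intros So. unfold step. apply sorted_stages; auto. intros h. lia. Qed.

End Scheme2.

Lemma INR_pos n : (1 <= n)%nat -> 0 < INR n.
Proof. intros; apply lt_0_INR; lia. Qed.

Lemma zidx_of n r a : (1 <= n)%nat -> (1 <= a)%nat -> INR a - 1 <= r * INR n < INR a -> zidx n r = a.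
Proof.
  intros Hn Ha H. unfold zidx.
  rewrite (Int_part_unique _ (Z.of_nat (a - 1))).
  - rewrite Nat2Z.id. lia.
  - rewrite <- INR_IZR_INZ, minus_INR by lia. simpl. lra.
Qed.

Lemma zidx_range n z : (1 <= n)%nat -> 0 <= z < 1 ->
  (1 <= zidx n z <= n)%nat /\ INR (zidx n z) - 1 <= z * INR n < INR (zidx n z).
Proof.
  intros Hn Hz. assert (Pn := INR_pos n Hn).
  destruct (base_Int_part (z * INR n)) as [B1 B2].
  set (k := Int_part (z * INR n)) in *.
  assert (0 <= z * INR n) by (apply Rmult_le_pos; lra).
  assert (z * INR n < INR n) by (rewrite <- (Rmult_1_l (INR n)) at 2; apply Rmult_lt_compat_r; lra).
  assert (k0 : (0 <= k)%Z). { assert (IZR (-1) < IZR k) by lra. apply lt_IZR in H1. lia. }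
  assert (kn : (k < Z.of_nat n)%Z). { assert (IZR k < IZR (Z.of_nat n)) by (rewrite <- INR_IZR_INZ; lra). apply lt_IZR in H1. lia. }
  unfold zidx. fold k.
  assert (E : INR (S (Z.to_nat k)) = IZR k + 1).
  { rewrite S_INR, INR_IZR_INZ, Z2Nat.id by lia. auto. }
  rewrite E. split; [lia|lra].
Qed.

Lemma zidx_mono n z z' : (1 <= n)%nat -> z <= z' -> (zidx n z <= zidx n z')%nat.
Proof.
  intros Hn H. unfold zidx.
  assert (z * INR n <= z' * INR n) by (apply Rmult_le_compat_r; [left; apply INR_pos|]; auto).
  apply Int_part_mono in H0. lia.
Qed.

Lemma z_le_zpos n z : (1 <= n)%nat -> 0 <= z < 1 -> z <= zpos n (zidx n z).
Proof.
  intros Hn Hz. destruct (zidx_range n z Hn Hz) as [_ [_ H]]. assert (P := INR_pos n Hn).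
  unfold zpos. apply Rmult_le_reg_r with (INR n); auto.
  unfold Rdiv. rewrite Rmult_assoc, Rinv_l by lra. lra.
Qed.

Lemma zidx_Fn n z a : (1 <= n)%nat -> 0 <= z < 1 -> (1 <= a)%nat ->
  zidx n (z - zpos n (zidx n z) + zpos n a) = a.
Proof.
  intros Hn Hz Ha. destruct (zidx_range n z Hn Hz) as [_ H]. assert (P := INR_pos n Hn).
  apply zidx_of; auto.
  replace ((z - zpos n (zidx n z) + zpos n a) * INR n) with (z * INR n - INR (zidx n z) + INR a).
  - lra.
  - unfold zpos. field. lra.
Qed.

Lemma alpha_par n c i : Perm n c -> (1 <= i <= n)%nat -> alpha n c (par c i) = i.
Proof.
  intros [P1 [P2 P3]] Hi. unfold alpha.
  destruct (find (fun x => (par c x =? par c i)%nat) (seq 1 n)) as [x|] eqn:E.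
  - apply find_some in E as [E1 E2]. apply in_seq in E1. apply Nat.eqb_eq in E2.
    apply P2; auto; lia.
  - assert (E' := find_none _ _ E i). cbv beta in E'; rewrite Nat.eqb_refl in E'. discriminate E'. apply in_seq; lia.
Qed.

Lemma alpha_spec n c j : Perm n c -> (1 <= j <= n)%nat ->
  (1 <= alpha n c j <= n)%nat /\ par c (alpha n c j) = j.
Proof.
  intros P Hj. destruct P as [P1 [P2 P3]] eqn:EP. destruct (P3 j Hj) as [i [Hi Ei]].
  subst j. rewrite alpha_par; auto.
Qed.

Lemma tidx_mono dt t t' : 0 < dt -> t <= t' -> (tidx dt t <= tidx dt t')%nat.
Proof.
  intros Hd H. unfold tidx. assert (t / dt <= t' / dt).
  { unfold Rdiv. apply Rmult_le_compat_r; auto. left; apply Rinv_0_lt_compat; auto. }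
  apply Int_part_mono in H0. lia.
Qed.

Theorem corollary3p3 (Q Th : R -> R -> R -> R) (T : R) (n : nat) (dt : R)
  (th0 q0 : nat -> R) :
  smooth3 Q ->
  (forall x y z, exists d, derivable_pt_lim (fun a => Q a y z) x d /\ 0 < d) ->
  (forall x y z, exists d, derivable_pt_lim (fun a => Q x a z) y d /\ d < 0) ->
  (forall w z t, Th w z t + Q (Th w z t) z t = w) ->
  (forall w z t, exists d, derivable_pt_lim (fun a => Th a z t) w d /\ 0 < d) ->
  (forall w z t, exists d, derivable_pt_lim (fun a => Th w a t) z d /\ 0 < d) ->
  0 < T -> (1 <= n)%nat -> 0 < dt ->
  (forall j, (1 <= j)%nat -> (j < n)%nat -> th0 j <= th0 (S j)) ->
  (forall j, (1 <= j <= n)%nat -> q0 j <= Q (th0 j) (zpos n j) 0) ->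
  (* (i) *)
  (forall t, 0 <= t < T -> forall z z', 0 <= z -> z <= z' -> z' < 1 ->
     thetan n Th th0 q0 dt t z <= thetan n Th th0 q0 dt t z') /\
  (* (ii) *)
  (forall t z, 0 <= t < T -> 0 <= z < 1 ->
     thetahat n Th th0 q0 dt t z + qhat n Th th0 q0 dt t z
     = theta0 n th0 z + q0f n q0 z) /\
  (* (iii) *)
  (forall z, 0 <= z < 1 -> forall t t', 0 <= t -> t <= t' -> t' < T ->
     thetahat n Th th0 q0 dt t z <= thetahat n Th th0 q0 dt t' z) /\
  (* (iv) *)
  (forall t z, 0 <= t < T -> 0 <= z < 1 ->
     qn n Th th0 q0 dt t z
     <= Q (thetan n Th th0 q0 dt t z) z (INR (tidx dt t) * dt)).
Proof.
  intros _ HQx HQz HTh HThw' HThz' HT Hn Hdt Hth0 Hq0.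
  assert (HThw : forall w w' z t, w <= w' -> Th w z t <= Th w' z t).
  { intros w w' z t H. apply (mono_of_deriv (fun a => Th a z t)); auto. }
  assert (HThz : forall w z z' t, z <= z' -> Th w z t <= Th w z' t).
  { intros w z z' t H. apply (mono_of_deriv (fun a => Th w a t)); auto. }
  assert (HQzm : forall x z z' t, z <= z' -> Q x z' t <= Q x z t).
  { intros x z z' t H. apply (antimono_of_deriv (fun a => Q x a t)); auto. }
  assert (Hf : forall z t x y, x <= y -> x + Q x z t <= y + Q y z t).
  { intros z t x y H. apply (mono_of_deriv (fun a => a + Q a z t)); auto.
    intros a. destruct (HQx a z t) as [d [Hd Hp]]. exists (1 + d). split; [|lra].
    apply (derivable_pt_lim_plus id (fun a => Q a z t) a 1 d); auto. apply derivable_pt_lim_id. }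
  set (M := thM th0 q0).
  assert (Inv : forall k, Perm n (cfg n Th th0 q0 dt k) /\ Sorted n (cfg n Th th0 q0 dt k)).
  { induction k as [|k [IP IS]].
    - simpl. split.
      + split; [|split]; simpl; auto. intros j Hj. exists j. auto.
      + intros i H1 H2. simpl. apply Hth0; auto.
    - change (cfg n Th th0 q0 dt (S k)) with (step n Th M (INR (S k) * dt) (cfg n Th th0 q0 dt k)).
      split.
      + unfold step. apply (perm_stages n Th M _ Hn); auto.
      + apply (sorted_step n Th M _ Hn HThw HThz); auto. }
  assert (Dry : forall k i, (1 <= i <= n)%nat ->
     ~ wetP n Th M (INR (S k) * dt) (cfg n Th th0 q0 dt (S k)) i).
  { intros k i Hi. change (cfg n Th th0 q0 dt (S k)) with (step n Th M (INR (S k) * dt) (cfg n Th th0 q0 dt k)).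
    unfold step. apply (stages_dry n Th M _ Hn). lia. }
  assert (Trk : forall k j, (1 <= j <= n)%nat ->
     val (cfg n Th th0 q0 dt k) (alpha n (cfg n Th th0 q0 dt k) j) <=
     val (cfg n Th th0 q0 dt (S k)) (alpha n (cfg n Th th0 q0 dt (S k)) j)).
  { intros k j Hj. destruct (Inv k) as [P _]. destruct (Inv (S k)) as [P' _].
    destruct (alpha_spec n _ j P Hj) as [A1 A2].
    assert (Tr : Track n (cfg n Th th0 q0 dt k) (cfg n Th th0 q0 dt (S k))).
    { change (cfg n Th th0 q0 dt (S k)) with (step n Th M (INR (S k) * dt) (cfg n Th th0 q0 dt k)).
      unfold step. apply (track_stages n Th M _ Hn HThz); auto. }
    destruct (Tr _ A1) as [i' [Hi' [E V]]]. rewrite A2 in E. replace (alpha n (cfg n Th th0 q0 dt (S k)) j) with i'; [exact V|]. rewrite <- E, alpha_par; auto. }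
  assert (Trk' : forall k k' j, (k <= k')%nat -> (1 <= j <= n)%nat ->
     val (cfg n Th th0 q0 dt k) (alpha n (cfg n Th th0 q0 dt k) j) <=
     val (cfg n Th th0 q0 dt k') (alpha n (cfg n Th th0 q0 dt k') j)).
  { intros k k' j Hk Hj. induction Hk; [lra|]. eapply Rle_trans; [apply IHHk|]. apply Trk; auto. }
  assert (Hat : forall t z, 0 <= z < 1 ->
     thetahat n Th th0 q0 dt t z = val (cfg n Th th0 q0 dt (tidx dt t))
        (alpha n (cfg n Th th0 q0 dt (tidx dt t)) (zidx n z)) /\
     qhat n Th th0 q0 dt t z = M (zidx n z) - val (cfg n Th th0 q0 dt (tidx dt t))
        (alpha n (cfg n Th th0 q0 dt (tidx dt t)) (zidx n z))).
  { intros t z Hz. destruct (zidx_range n z Hn Hz) as [Hj _].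
    destruct (Inv (tidx dt t)) as [P _].
    destruct (alpha_spec n _ _ P Hj) as [A1 A2].
    unfold thetahat, qhat, thetan, qn, Fn. cbv zeta.
    rewrite zidx_Fn by (auto; lia). rewrite A2. split; reflexivity. }
  split; [|split; [|split]].
  - intros t Ht z z' Hz Hzz Hz'. unfold thetan.
    destruct (Inv (tidx dt t)) as [_ S].
    destruct (zidx_range n z Hn (conj Hz (Rle_lt_trans _ _ _ Hzz Hz'))) as [Hj _].
    destruct (zidx_range n z' Hn (conj (Rle_trans _ _ _ Hz Hzz) Hz')) as [Hj' _].
    apply (sorted_le n Hn _ S); auto; try lia. apply zidx_mono; auto.
  - intros t z Ht Hz. destruct (Hat t z Hz) as [A B]. rewrite A, B.
    unfold theta0, q0f. unfold M, thM. ring.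
  - intros z Hz t t' Ht Htt Ht'. rewrite (proj1 (Hat t z Hz)), (proj1 (Hat t' z Hz)).
    apply Trk'. apply tidx_mono; auto. apply (zidx_range n z Hn Hz).
  - intros t z Ht Hz. destruct (zidx_range n z Hn Hz) as [Hj _].
    assert (Zl := z_le_zpos n z Hn Hz).
    unfold qn, thetan. cbv zeta.
    set (j := zidx n z) in *.
    destruct (tidx dt t) as [|k].
    + simpl. rewrite Rmult_0_l. unfold thM.
      eapply Rle_trans; [|apply HQzm; exact Zl]. specialize (Hq0 j Hj). lra.
    + assert (D := Dry k j Hj). unfold wetP in D. fold M.
      set (c := cfg n Th th0 q0 dt (S k)) in *.
      set (th := val c j) in *. set (w := M (par c j)) in *.
      assert (H1 : Th w (zpos n j) (INR (S k) * dt) <= th) by lra.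
      assert (H2 := Hf (zpos n j) (INR (S k) * dt) _ _ H1). rewrite HTh in H2.
      eapply Rle_trans; [|apply HQzm; exact Zl]. lra.
Qed.
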